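(* Let $(A,\cdot)$ and $(B,\circ)$ be nearly associative algebras over a field $\mathbb{K}$ of characteristic $0$. Suppose $(l_A,r_A,B)$ is a bimodule of $(A,\cdot)$ and $(l_B,r_B,A)$ is a bimodule of $(B,\circ)$, where $l_A,r_A:A\to\mathrm{End}(B)$ and $l_B,r_B:B\to\mathrm{End}(A)$ are linear maps satisfying, for all $x,y\in A$ and $a,b\in B$: \begin{align*} &r_B(l_A(x)a)y+y\cdot(r_B(a)x)-(l_B(a)y)\cdot x-l_B(r_A(y)a)x=0,\\ &r_B(a)(x\cdot y)-y\cdot(l_B(a)x)-r_B(r_A(x)a)y=0,\\ &l_B(a)(x\cdot y)-(r_B(a)y)\cdot x-l_B(l_A(y)a)x=0,\\ &r_A(l_B(a)x)b+b\circ(r_A(x)a)-(l_A(x)b)\circ a-l_A(r_B(b)x)a=0,\\ &r_A(x)(a\circ b)-b\circ(l_A(x)a)-r_A(r_B(a)x)b=0,\\ &l_A(x)(a\circ b)-(r_A(x)b)\circ a-l_A(l_B(b)x)a=0. \end{align*} Then $(A\oplus B,\ast)$ is a nearly associative algebra, where $(x+a)\ast(y+b)=(x\cdot y+l_B(a)y+r_B(b)x)+(a\circ b+l_A(x)b+r_A(y)a)$ for all $x,y\in A$, $a,b\in B$.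
   Context: An algebra $(A,\cdot)$ is nearly associative if $x\cdot(y\cdot z)=(z\cdot x)\cdot y$ for all $x,y,z\in A$. A triple $(l,r,V)$, with $V$ a linear space and $l,r:A\to\mathrm{End}(V)$ linear, is a bimodule of $(A,\cdot)$ if for all $x,y\in A$: $l(x)l(y)=r(y)r(x)$, $l(x)r(y)=l(y\cdot x)$, and $r(x)l(y)=r(x\cdot y)$. *)

(* Defs.v *)
From HB Require Import structures.
From mathcomp Require Import all_boot all_algebra.
Set Implicit Arguments. Unset Strict Implicit. Unset Printing Implicit Defensive.
Import GRing.Theory.
Local Open Scope ring_scope.

Definition bilinear_map (K : fieldType) (U V W : lmodType K) (f : U -> V -> W) :=
  (forall v, linear (fun u => f u v)) /\ (forall u, linear (f u)).

Definition nearly_associative (T : Type) (mul : T -> T -> T) :=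
  forall x y z, mul x (mul y z) = mul (mul z x) y.

Definition bimodule (K : fieldType) (A V : lmodType K)
  (mul : A -> A -> A) (l r : A -> V -> V) :=
  bilinear_map l /\ bilinear_map r /\
  (forall x y v, l x (l y v) = r y (r x v)) /\
  (forall x y v, l x (r y v) = l (mul y x) v) /\
  (forall x y v, r x (l y v) = r (mul x y) v).

Definition sum_prod (K : fieldType) (A B : lmodType K)
  (mulA : A -> A -> A) (mulB : B -> B -> B)
  (lA rA : A -> B -> B) (lB rB : B -> A -> A) (u v : A * B) : A * B :=
  (mulA u.1 v.1 + lB u.2 v.1 + rB v.2 u.1,
   mulB u.2 v.2 + lA u.1 v.2 + rA v.1 u.2).

(* Main.v *)
Require Import Defs.
From HB Require Import structures.
From mathcomp Require Import all_boot all_algebra.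
Import GRing.Theory.
Local Open Scope ring_scope.
Set Implicit Arguments. Unset Strict Implicit.

Lemma linD (K : fieldType) (U V : lmodType K) (f : U -> V) :
  linear f -> forall u v, f (u + v) = f u + f v.
Proof. by move=> Lf u v; rewrite -[u in LHS]scale1r Lf scale1r. Qed.

Lemma bilD (K : fieldType) (U V W : lmodType K) (f : U -> V -> W) :
  bilinear_map f -> (forall u u' v, f (u + u') v = f u v + f u' v) /\
                    (forall u v v', f u (v + v') = f u v + f u v').
Proof. by case=> H1 H2; split=> [u u' v|u v v']; [exact: (linD (H1 v) u u')|exact: (linD (H2 u) v v')]. Qed.

Lemma lin2 (K : fieldType) (U V : lmodType K) (f g : U -> V) :
  linear f -> linear g -> linear (fun u => f u + g u).
Proof. by move=> Lf Lg a u v; rewrite Lf Lg scalerDr addrACA. Qed.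

Lemma lin3 (K : fieldType) (U V : lmodType K) (f g h : U -> V) :
  linear f -> linear g -> linear h -> linear (fun u => f u + g u + h u).
Proof. by move=> Lf Lg Lh; apply: lin2 => //; apply: lin2. Qed.

Lemma linpair (K : fieldType) (U V W : lmodType K) (f : U -> V) (g : U -> W) :
  linear f -> linear g -> linear (fun u => (f u, g u)).
Proof. by move=> Lf Lg a u v; rewrite Lf Lg. Qed.

Theorem mainTheorem7 (K : fieldType) (charK0 : [pchar K] =i pred0)
  (A B : lmodType K) (mulA : A -> A -> A) (mulB : B -> B -> B)
  (lA rA : A -> B -> B) (lB rB : B -> A -> A) :
  bilinear_map mulA -> nearly_associative mulA ->
  bilinear_map mulB -> nearly_associative mulB ->
  bimodule mulA lA rA -> bimodule mulB lB rB ->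
  (forall x y a, rB (lA x a) y + mulA y (rB a x) - mulA (lB a y) x
                 - lB (rA y a) x = 0) ->
  (forall x y a, rB a (mulA x y) - mulA y (lB a x) - rB (rA x a) y = 0) ->
  (forall x y a, lB a (mulA x y) - mulA (rB a y) x - lB (lA y a) x = 0) ->
  (forall x a b, rA (lB a x) b + mulB b (rA x a) - mulB (lA x b) a
                 - lA (rB b x) a = 0) ->
  (forall x a b, rA x (mulB a b) - mulB b (lA x a) - rA (rB a x) b = 0) ->
  (forall x a b, lA x (mulB a b) - mulB (rA x b) a - lA (lB b x) a = 0) ->
  bilinear_map (sum_prod mulA mulB lA rA lB rB) /\
  nearly_associative (sum_prod mulA mulB lA rA lB rB).
Proof.
move=> bA nA bB nB [blA [brA [mA1 [mA2 mA3]]]] [blB [brB [mB1 [mB2 mB3]]]] e1 e2 e3 e4 e5 e6.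
split.
  split=> v.
    apply: linpair; apply: lin3.
    - by move=> k u w; rewrite (bA.1 _).
    - by move=> k u w; rewrite (blB.1 _).
    - by move=> k u w; rewrite (brB.2 _).
    - by move=> k u w; rewrite (bB.1 _).
    - by move=> k u w; rewrite (blA.1 _).
    - by move=> k u w; rewrite (brA.2 _).
  apply: linpair; apply: lin3.
  - by move=> k u w; rewrite (bA.2 _).
  - by move=> k u w; rewrite (blB.2 _).
  - by move=> k u w; rewrite (brB.1 _).
  - by move=> k u w; rewrite (bB.2 _).
  - by move=> k u w; rewrite (blA.2 _).
  - by move=> k u w; rewrite (brA.1 _).
have [dA1 dA2] := bilD bA. have [dB1 dB2] := bilD bB.
have [dlA1 dlA2] := bilD blA. have [drA1 drA2] := bilD brA.
have [dlB1 dlB2] := bilD blB. have [drB1 drB2] := bilD brB.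
case=> x a [y b] [z c]; rewrite /sum_prod /=; congr pair.
  rewrite !(dA1, dA2, dlA1, dlA2, drA1, drA2, dB1, dB2, dlB1, dlB2, drB1, drB2).
  have /eqP f1 := e1 y x c. have /eqP f2 := e2 z x b. have /eqP f3 := e3 y z a.
  move: f1 f2 f3; rewrite !subr_eq !add0r => /eqP f1 /eqP f2 /eqP f3.
  have {}f1 : mulA x (rB c y) = lB (rA x c) y + mulA (lB c x) y - rB (lA y c) x.
    by rewrite -f1 addrC addKr.
  rewrite f2 mB3 -mB1 -mB2 f3 f1 nA !addrA.
  by rewrite [LHS](@GRing.add A).[ACl (1*4*7*9*6*3*12*2*10*8*5*11)] addrNK.
rewrite !(dA1, dA2, dlA1, dlA2, drA1, drA2, dB1, dB2, dlB1, dlB2, drB1, drB2).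
have /eqP f1 := e4 z b a. have /eqP f2 := e5 y c a. have /eqP f3 := e6 x b c.
move: f1 f2 f3; rewrite !subr_eq !add0r => /eqP f1 /eqP f2 /eqP f3.
have {}f1 : mulB a (rA z b) = lA (rB a z) b + mulB (lA z a) b - rA (lB b z) a.
  by rewrite -f1 addrC addKr.
rewrite f2 mA3 -mA1 -mA2 f3 f1 nB !addrA.
by rewrite [LHS](@GRing.add B).[ACl (1*4*7*9*6*3*12*2*10*8*5*11)] addrNK.
Qed.
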